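(* Let $\mathcal H$ be an $n$-vertex linear hypergraph and let $\{A,B\}$ be a partition of the edge set of $\mathcal H$ such that $|A|+|B|-n \le |A|/4$. If for every two distinct intersecting edges $e,f\in A$ the pair $\{e,f\}$ is useful, then $\mathcal H$ has a proper edge-colouring with $n$ colours in which each colour is assigned to at most two edges.
   Context: A hypergraph has a finite vertex set and a set of nonempty edges; linear means any two distinct edges share at most one vertex. For an edge $e$, $N(e)$ denotes the set of edges $f\ne e$ of $\mathcal H$ with $f\cap e\ne\varnothing$. In an $n$-vertex hypergraph, a pair $\{e,f\}\subseteq\mathcal H$ is useful if $e\ne f$, $e\cap f\ne\varnothing$, and $|N(e)\cap N(f)|\le n-2$. A proper edge-colouring assigns colours to edges so that distinct intersecting edges get different colours. *)

(* Defs.v *)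
From mathcomp Require Import all_boot.
Set Implicit Arguments. Unset Strict Implicit. Unset Printing Implicit Defensive.

(* A hypergraph on the finite vertex type T is a set H of edges (subsets of T).
   The number of vertices n is #|T|. *)

Definition hypergraph (T : finType) (H : {set {set T}}) : Prop :=
  forall e, e \in H -> e != set0.

Definition linear_hg (T : finType) (H : {set {set T}}) : Prop :=
  forall e f, e \in H -> f \in H -> e != f -> #|e :&: f| <= 1.

Definition nbhd (T : finType) (H : {set {set T}}) (e : {set T}) : {set {set T}} :=
  [set f in H | (f != e) && (f :&: e != set0)].

(* useful pair in an n-vertex hypergraph, n = #|T|; |N(e) ∩ N(f)| <= n - 2
   written as |N(e) ∩ N(f)| + 2 <= n to avoid truncated subtraction *)
Definition useful (T : finType) (H : {set {set T}}) (e f : {set T}) : Prop :=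
  [/\ e \in H, f \in H, e != f, e :&: f != set0
    & #|nbhd H e :&: nbhd H f| + 2 <= #|T|].

Definition proper_colouring (T : finType) (H : {set {set T}}) (k : nat)
    (c : {set T} -> nat) : Prop :=
  (forall e, e \in H -> c e < k) /\
  (forall e f, e \in H -> f \in H -> e != f -> e :&: f != set0 -> c e != c f).

(* Main.v *)
Require Import Defs.
From mathcomp Require Import all_boot.
From Stdlib Require Classical_Prop.
Set Implicit Arguments. Unset Strict Implicit. Unset Printing Implicit Defensive.

Definition okc (T : finType) (H : {set {set T}}) (c : {set T} -> {set T}) : Prop :=
  forall z, z \in H -> exists w, (w = z \/ z :&: w = set0) /\
    forall g, g \in H -> c g = c z -> g = z \/ g = w.

Lemma ok_disj T (H : {set {set T}}) c e f : okc H c -> e \in H -> f \in H ->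
  e != f -> c e = c f -> e :&: f = set0.
Proof.
move=> ok He Hf ef cef; have [w [Hw Hfib]] := ok e He.
have [fe|fw] := Hfib f Hf (esym cef); first by move: ef; rewrite fe eqxx.
case: Hw => [we|]; last by rewrite fw.
by move: ef; rewrite fw we eqxx.
Qed.

Lemma ok_triple T (H : {set {set T}}) c a b d : okc H c -> a \in H -> b \in H -> d \in H ->
  c a = c b -> c b = c d -> a = b \/ b = d \/ a = d.
Proof.
move=> ok Ha Hb Hd cab cbd; have [w [_ Hfib]] := ok a Ha.
have [ba|bw] := Hfib b Hb (esym cab); first by left.
have [da|dw] := Hfib d Hd (esym (etrans cab cbd)); first by right; right.
by right; left; rewrite bw dw.
Qed.

Definition single T (H : {set {set T}}) (c : {set T} -> {set T}) u : bool :=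
  [forall g in H, (c g == c u) ==> (g == u)].

Lemma singleP T (H : {set {set T}}) c u g : single H c u -> g \in H -> c g = c u -> g = u.
Proof. by move=> /forall_inP s Hg cg; apply/eqP; apply: (implyP (s g Hg)); apply/eqP. Qed.

Lemma cost_lt T (H : {set {set T}}) (c c' : {set T} -> {set T}) w : w \in H ->
  (forall g, g \in H -> (c' g \in c @: H) && (c' g != c w)) -> #|c' @: H| < #|c @: H|.
Proof.
move=> Hw hyp.
have sub : c' @: H \subset (c @: H) :\ c w.
  apply/subsetP => _ /imsetP [g Hg ->]; rewrite !inE.
  by have /andP[h1 h2] := hyp g Hg; rewrite h1 h2.
rewrite (cardsD1 (c w) (c @: H)) imset_f // add1n ltnS.
exact: subset_leq_card.
Qed.

Lemma merge T (H : {set {set T}}) c u1 u2 : okc H c -> u1 \in H -> u2 \in H ->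
  single H c u1 -> single H c u2 -> u1 != u2 -> u1 :&: u2 = set0 ->
  exists c', okc H c' /\ #|c' @: H| < #|c @: H|.
Proof.
move=> ok H1 H2 s1 s2 n12 d12.
have S1 := singleP s1; have S2 := singleP s2.
exists (fun g => if g == u2 then c u1 else c g); split.
- move=> z Hz /=.
  case: (eqVneq z u2) => [->|zu2].
  + exists u1; split; first by right; rewrite setIC.
    move=> g Hg; case: (eqVneq g u2) => [->|gu2]; first by left.
    by move=> /(S1 g Hg) ->; right.
  + case: (eqVneq z u1) => [zu1|zu1].
    * subst z; exists u2; split; first by right.
      move=> g Hg; case: (eqVneq g u2) => [->|gu2]; first by right.
      by move=> /(S1 g Hg) ->; left.
    * have [w [Hw Hfib]] := ok z Hz; exists w; split => // g Hg.
      case: (eqVneq g u2) => [_ e|gu2]; last exact: Hfib.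
      by move: zu1; rewrite (S1 z Hz (esym e)) eqxx.
- apply: (cost_lt H2) => g Hg; case: (eqVneq g u2) => [_|gu2].
  + rewrite imset_f //=; apply/eqP => e; move: n12; by rewrite (S2 u1 H1 e) eqxx.
  + rewrite imset_f //=; apply/eqP => e; move: gu2; by rewrite (S2 g Hg e) eqxx.
Qed.
Lemma augment T (H : {set {set T}}) c u1 u2 x y : hypergraph H -> okc H c ->
  u1 \in H -> u2 \in H -> single H c u1 -> single H c u2 -> u1 != u2 ->
  x \in H -> y \in H -> x != y -> c x = c y -> x :&: u1 = set0 -> y :&: u2 = set0 ->
  exists c', okc H c' /\ #|c' @: H| < #|c @: H|.
Proof.
move=> hg ok H1 H2 s1 s2 n12 Hx Hy nxy cxy dx dy.
have S1 := singleP s1; have S2 := singleP s2.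
have xu1 : x != u1.
  by apply/eqP => e; move: dx; rewrite e setIid => /eqP; apply/negP; apply: hg.
have yu2 : y != u2.
  by apply/eqP => e; move: dy; rewrite e setIid => /eqP; apply/negP; apply: hg.
have cyu1 : c y != c u1.
  apply/eqP => e; move: xu1; by rewrite (S1 x Hx (etrans cxy e)) eqxx.
have cyu2 : c y != c u2.
  apply/eqP => e; move: yu2; by rewrite (S2 y Hy e) eqxx.
have cu12 : c u1 != c u2.
  apply/eqP => e; move: n12; by rewrite (S2 u1 H1 e) eqxx.
have xu2 : x != u2.
  by apply/eqP => e; move: cyu2; rewrite -cxy e eqxx.
have yu1 : y != u1.
  by apply/eqP => e; move: cyu1; rewrite e eqxx.
have fibY : forall g, g \in H -> c g = c y -> g != x -> g = y.
  move=> g Hg cg gx.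
  have [e|[e|e]] := ok_triple ok Hx Hy Hg cxy (esym cg).
  - by move: nxy; rewrite e eqxx.
  - by [].
  - by move: gx; rewrite e eqxx.
exists (fun g => if g == x then c u1 else if g == u2 then c y else c g); split.
- move=> z Hz /=.
  case: (eqVneq z x) => [zx|zx].
  + subst z; exists u1; split; first by right.
    move=> g Hg; case: (eqVneq g x) => [->|gx]; first by left.
    case: (eqVneq g u2) => [_ e|gu2]; first by move: cyu1; rewrite e eqxx.
    by move=> /(S1 g Hg) ->; right.
  case: (eqVneq z u2) => [zu2|zu2].
  + subst z; exists y; split; first by right; rewrite setIC.
    move=> g Hg; case: (eqVneq g x) => [_ e|gx]; first by move: cyu1; rewrite e eqxx.
    case: (eqVneq g u2) => [->|gu2]; first by left.
    by move=> /(fibY g Hg) /(_ gx) ->; right.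
  case: (eqVneq z u1) => [zu1|zu1].
  + subst z; exists x; split; first by right; rewrite setIC.
    move=> g Hg; case: (eqVneq g x) => [->|gx]; first by right.
    case: (eqVneq g u2) => [_ e|gu2]; first by move: cyu1; rewrite e eqxx.
    by move=> /(S1 g Hg) ->; left.
  case: (eqVneq z y) => [zy|zy].
  + subst z; exists u2; split; first by right.
    move=> g Hg; case: (eqVneq g x) => [_ e|gx]; first by move: cyu1; rewrite e eqxx.
    case: (eqVneq g u2) => [->|gu2]; first by right.
    by move=> /(fibY g Hg) /(_ gx) ->; left.
  have [w [Hw Hfib]] := ok z Hz; exists w; split => // g Hg.
  case: (eqVneq g x) => [_ e|gx].
    by move: zu1; rewrite (S1 z Hz (esym e)) eqxx.
  case: (eqVneq g u2) => [_ e|gu2]; last exact: Hfib.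
  by move: zy; rewrite (fibY z Hz (esym e) zx) eqxx.
- apply: (cost_lt H2) => g Hg.
  case: (eqVneq g x) => [_|gx]; first by rewrite imset_f.
  case: (eqVneq g u2) => [_|gu2]; first by rewrite imset_f.
  rewrite imset_f //=; apply/eqP => e; move: gu2; by rewrite (S2 g Hg e) eqxx.
Qed.
From mathcomp Require Import zify.

Lemma pair_count (K K' : finType) (f : K -> K') (X : {set K}) :
  (forall g, g \in X -> exists2 g', g' \in X & (g' != g) && (f g' == f g)) ->
  2 * #|f @: X| <= #|X|.
Proof.
move=> hp.
rewrite -[#|X|]sum1_card (partition_big_imset f) /= mulnC -sum_nat_const.
apply: leq_sum => _ /imsetP [g Hg ->]; have [g' Hg' /andP[ne fe]] := hp g Hg.
rewrite (bigD1 g) /=; last by rewrite Hg eqxx.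
rewrite (bigD1 g') /=; last by rewrite Hg' fe ne.
by rewrite addnA leq_addr.
Qed.

Lemma cardU_le (K : finType) (X Y : {set K}) : #|X :|: Y| <= #|X| + #|Y|.
Proof. by rewrite cardsU leq_subr. Qed.

Definition ptw T (H : {set {set T}}) (c : {set T} -> {set T}) u x : bool :=
  [exists y in H, (x != y) && (c x == c y) && (x :&: u == set0) && (y :&: u == set0)].
Definition pointed T (H : {set {set T}}) c u : bool := [exists x in H, ptw H c u x].

Lemma arith_fin m u s2 t cost fl nn n : u + s2 = m -> 2*t <= s2 -> cost <= u + t ->
  m <= nn + fl + 2 -> fl <= t -> nn + 2 <= n -> n < cost -> False.
Proof. lia. Qed.

Lemma step T (H A B : {set {set T}}) c :
  hypergraph H -> A :|: B = H -> A :&: B = set0 ->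
  4 * (#|A| + #|B|) <= 4 * #|T| + #|A| ->
  (forall e f, e \in A -> f \in A -> e != f -> e :&: f != set0 -> useful H e f) ->
  okc H c -> #|T| < #|c @: H| ->
  exists c', okc H c' /\ #|c' @: H| < #|c @: H|.
Proof.
move=> hg hAB hAB0 hcard huse ok hn.
case: (Classical_Prop.classic (exists c', okc H c' /\ #|c' @: H| < #|c @: H|)) => // Hno.
exfalso.
set U := [set u in H | single H c u].
set S2 := [set u in H | ~~ single H c u].
have noM : forall u1 u2, u1 \in U -> u2 \in U -> u1 != u2 -> u1 :&: u2 = set0 -> False.
  move=> u1 u2; rewrite !inE => /andP[H1 s1] /andP[H2 s2] n12 d12.
  by apply: Hno; apply: (merge ok H1 H2 s1 s2 n12 d12).
have noA : forall u1 u2 x y, u1 \in U -> u2 \in U -> u1 != u2 -> x \in H -> y \in H ->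
    x != y -> c x = c y -> x :&: u1 = set0 -> y :&: u2 = set0 -> False.
  move=> u1 u2 x y; rewrite !inE => /andP[H1 s1] /andP[H2 s2] n12 Hx Hy nxy cxy dx dy.
  by apply: Hno; apply: (augment hg ok H1 H2 s1 s2 n12 Hx Hy nxy cxy dx dy).
have partner : forall g, g \in S2 -> exists2 g', g' \in S2 & (g' != g) && (c g' == c g).
  move=> g; rewrite inE => /andP[Hg]; rewrite negb_forall_in => /exists_inP [g' Hg'].
  rewrite negb_imply => /andP[ce ne]; exists g'; last by rewrite ne ce.
  rewrite inE Hg'; apply/negP => sg'.
  by move: ne; rewrite (singleP sg' Hg (esym (eqP ce))) eqxx.
have F1 : #|U| + #|S2| = #|H|.
  rewrite -(cardsID U H).
  have -> : H :&: U = U by apply/setP => x; rewrite !inE; case: (x \in H).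
  have -> : H :\: U = S2.
    by apply/setP => x; rewrite !inE; case: (x \in H); case: (single H c x).
  by [].
have F2 : 2 * #|c @: S2| <= #|S2| := pair_count partner.
have F3 : #|c @: H| <= #|U| + #|c @: S2|.
  have sub : c @: H \subset c @: U :|: c @: S2.
    apply/subsetP => _ /imsetP [g Hg ->]; rewrite inE; case s: (single H c g).
    - by rewrite imset_f // inE Hg s.
    - by rewrite orbC imset_f // inE Hg s.
  apply: leq_trans (subset_leq_card sub) _; rewrite cardsU.
  apply: leq_trans (leq_subr _ _) _; rewrite leq_add2r; exact: leq_imset_card.
have F4 : #|A| + #|B| = #|H| by rewrite -hAB cardsU hAB0 cards0 subn0.
have F5 : #|U| <= #|U :&: A| + #|B|.
  rewrite -(cardsID A U) leq_add2l; apply: subset_leq_card; apply/subsetP => x.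
  rewrite !inE => /andP[xA /andP[xH _]]; move: xH; rewrite -hAB inE.
  by rewrite (negbTE xA).
set P := [set u in U | pointed H c u].
have pick_spec : forall u, pointed H c u ->
    exists x, [/\ x \in H, ptw H c u x & odflt u [pick x in H | ptw H c u x] = x].
  move=> u pu; case: pickP => [x /andP[Hx px]|none]; first by exists x.
  by move: pu => /exists_inP [x Hx px]; move: (none x); rewrite Hx px.
have F6 : #|P| <= #|c @: S2|.
  set phi := fun u => c (odflt u [pick x in H | ptw H c u x]).
  have inj : {in P &, injective phi}.
    move=> u1 u2 /setIdP[U1 p1] /setIdP[U2 p2]; rewrite /phi.
    have [x1 [Hx1 /exists_inP [y1 Hy1 /andP[/andP[/andP[n1 c1] d1] e1]] ->]] := pick_spec u1 p1.
    have [x2 [Hx2 /exists_inP [y2 Hy2 /andP[/andP[/andP[n2 c2] d2] e2]] ->]] := pick_spec u2 p2.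
    move=> c12; case: (eqVneq u1 u2) => // n12; exfalso.
    have [e|[e|e]] := ok_triple ok Hx1 Hy1 Hx2 (eqP c1) (etrans (esym (eqP c1)) c12).
    - by move: n1; rewrite e eqxx.
    - subst x2; exact: (noA u1 u2 x1 y1 U1 U2 n12 Hx1 Hy1 n1 (eqP c1) (eqP d1) (eqP d2)).
    - subst x2; apply: (noA u1 u2 y1 x1 U1 U2 n12 Hy1 Hx1 _ (esym (eqP c1)) (eqP e1) (eqP d2)).
      by rewrite eq_sym.
  rewrite -(card_in_imset inj); apply: subset_leq_card; apply/subsetP => v /imsetP [u /setIdP[_ pu] ->].
  rewrite /phi; have [x [Hx /exists_inP [y Hy /andP[/andP[/andP[nxy cxy] _] _]] ->]] := pick_spec u pu.
  rewrite imset_f // inE Hx; apply/negP => sx.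
  by move: nxy; rewrite (singleP sx Hy (esym (eqP cxy))) eqxx.
have F7 : #|U :&: A| <= #|(U :&: A) :\: P| + #|P|.
  rewrite -(cardsID P (U :&: A)) addnC leq_add2l; apply: subset_leq_card; exact: subsetIr.
have : 1 < #|(U :&: A) :\: P| by lia.
move=> /card_gt1P [e [f [eS fS ef]]].
move: eS fS; rewrite !inE => /andP[nPe /andP[/andP[He se] eA]] /andP[nPf /andP[/andP[Hf sf] fA]].
rewrite He se /= in nPe; rewrite Hf sf /= in nPf.
have eU : e \in U by rewrite inE He se.
have fU : f \in U by rewrite inE Hf sf.
have hef : e :&: f != set0 by apply/eqP => d; exact: (noM e f eU fU ef d).
have [_ _ _ _ hu] := huse e f eA fA ef hef.
set Fl := [set g in H | (g != e) && (g != f) && ((g :&: e == set0) || (g :&: f == set0))].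
have F8 : #|H| <= #|nbhd H e :&: nbhd H f| + #|Fl| + 2.
  have sub : H \subset (nbhd H e :&: nbhd H f) :|: Fl :|: [set e; f].
    apply/subsetP => g Hg; rewrite /nbhd !inE Hg /=.
    by case: (g == e); case: (g == f); case: (g :&: e == set0); case: (g :&: f == set0).
  apply: leq_trans (subset_leq_card sub) _.
  apply: leq_trans (cardU_le _ _) _; apply: leq_add; first exact: cardU_le.
  by rewrite cards2; case: (e != f).
have F9 : Fl \subset S2.
  apply/subsetP => g; rewrite !inE => /andP[Hg /andP[/andP[ge gf] d]]; rewrite Hg /=.
  apply/negP => sg; have gU : g \in U by rewrite inE Hg sg.
  by case/orP: d => /eqP d; [exact: (noM g e gU eU ge d) | exact: (noM g f gU fU gf d)].
have F10 : {in Fl &, injective c}.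
  move=> g g'; rewrite !inE => /andP[Hg /andP[/andP[ge gf] d]] /andP[Hg' /andP[/andP[ge' gf'] d']] cg.
  case: (eqVneq g g') => // ne; exfalso.
  case/orP: d => /eqP d; case/orP: d' => /eqP d'.
  - move/negP: nPe; apply; apply/exists_inP; exists g => //; apply/exists_inP; exists g' => //.
    by rewrite ne cg eqxx d d' eqxx.
  - exact: (noA e f g g' eU fU ef Hg Hg' ne cg d d').
  - by apply: (noA f e g g' fU eU _ Hg Hg' ne cg d d'); rewrite eq_sym.
  - move/negP: nPf; apply; apply/exists_inP; exists g => //; apply/exists_inP; exists g' => //.
    by rewrite ne cg eqxx d d' eqxx.
have F11 : #|Fl| <= #|c @: S2|.
  by rewrite -(card_in_imset F10); apply: subset_leq_card; apply: imsetS.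
exact: (arith_fin F1 F2 F3 F8 F11 hu hn).
Qed.

Lemma reach T (H A B : {set {set T}}) :
  hypergraph H -> A :|: B = H -> A :&: B = set0 ->
  4 * (#|A| + #|B|) <= 4 * #|T| + #|A| ->
  (forall e f, e \in A -> f \in A -> e != f -> e :&: f != set0 -> useful H e f) ->
  forall k c, okc H c -> #|c @: H| <= k -> exists c', okc H c' /\ #|c' @: H| <= #|T|.
Proof.
move=> hg hAB hAB0 hcard huse; elim=> [|k IH] c okc hk.
  by exists c; split => //; apply: leq_trans hk _.
case: (leqP #|c @: H| #|T|) => hn; first by exists c.
have [c' [ok' lt']] := step hg hAB hAB0 hcard huse okc hn.
apply: (IH c' ok'); by rewrite -ltnS (leq_trans lt' hk).
Qed.

Lemma index_eq (K : finType) (X : {set K}) x y :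
  x \in X -> y \in X -> index x (enum X) = index y (enum X) -> x = y.
Proof.
move=> hx hy h; have := congr1 (nth x (enum X)) h.
by rewrite !nth_index ?mem_enum.
Qed.

Theorem proposition5p4 (T : finType) (H A B : {set {set T}}) :
  hypergraph H -> linear_hg H ->
  A :|: B = H -> A :&: B = set0 ->
  4 * (#|A| + #|B|) <= 4 * #|T| + #|A| ->
  (forall e f, e \in A -> f \in A -> e != f -> e :&: f != set0 -> useful H e f) ->
  exists c : {set T} -> nat,
    proper_colouring H #|T| c /\
    (forall i, #|[set e in H | c e == i]| <= 2).
Proof.
move=> hg _ hAB hAB0 hcard huse.
have ok0 : okc H id.
  by move=> z Hz; exists z; split; [left | move=> g Hg /= ->; left].
have [c [okc hc]] := reach hg hAB hAB0 hcard huse ok0 (leqnn #|(@id {set T}) @: H|).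
exists (fun e => index (c e) (enum (c @: H))); split; first split.
- move=> e He; apply: leq_trans hc; rewrite cardE index_mem mem_enum.
  exact: imset_f.
- move=> e f He Hf ef ief; apply/negP => /eqP h.
  have cef := index_eq (imset_f c He) (imset_f c Hf) h.
  by move: ief; rewrite (ok_disj okc He Hf ef cef) eqxx.
- move=> i; set S := [set e in H | _].
  case: (eqVneq S set0) => [->|/set0Pn [e0]]; first by rewrite cards0.
  rewrite inE => /andP[He0 /eqP i0].
  have [w [_ hfib]] := okc e0 He0.
  have sub : S \subset [set e0; w].
    apply/subsetP => g; rewrite !inE => /andP[Hg /eqP ig].
    have := index_eq (imset_f c Hg) (imset_f c He0) (etrans ig (esym i0)).
    by move=> /(hfib g Hg) [->|->]; rewrite eqxx ?orbT.
  apply: leq_trans (subset_leq_card sub) _.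
  by rewrite cards2; case: (e0 != w).
Qed.
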